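(* Let $1\leq i\leq n-2$ and $k=\lceil n/(n-i)\rceil$. There exist $i$-dimensional linear subspaces $H_1,\dots,H_k$ of $\mathbb{R}^n$ such that all of the following hold: (i) $H_1^\perp+\cdots+H_k^\perp=\mathbb{R}^n$, and $\{H_1^\perp,\dots,H_k^\perp\}$ cannot be partitioned into two nonempty mutually orthogonal subsets; (ii) if $E\subset S^{n-1}$ is nonempty, closed, and $S^{n-1}\cap(H_j^\perp+x)\subset E$ for all $j=1,\dots,k$ and $x\in E$, then $E=S^{n-1}$; (iii) if $F\subset\mathbb{R}^n$ is closed and invariant under every rotation fixing $H_j$, for each $j$, then $F$ is a union of spheres centered at the origin; (iv) if $K$ is a convex body rotationally symmetric with respect to each $H_j$, then $K$ is a ball centered at the origin.
   Context: $H^\perp$ is the orthogonal complement; $S^{n-1}$ the unit sphere. A rotation fixing $H$ is an element of $SO(n)$ acting as the identity on $H$. A set $X$ is rotationally symmetric with respect to an $i$-dimensional subspace $H$ if for every $x\in H$, $X\cap(H^\perp+x)$ is a union of $(n-i-1)$-dimensional spheres centered at $x$. Two families of subspaces are mutually orthogonal if every subspace of one is orthogonal to every subspace of the other. A convex body is a compact convex set with nonempty interior. *)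

(* Defs.v *)
From HB Require Import structures.
From mathcomp Require Import all_boot all_order all_algebra.
From mathcomp Require Import all_classical all_reals all_analysis.
Set Implicit Arguments. Unset Strict Implicit. Unset Printing Implicit Defensive.
Import Order.TTheory GRing.Theory Num.Theory.
Import numFieldNormedType.Exports.
Local Open Scope classical_set_scope.
Local Open Scope ring_scope.

(* Vectors of R^n are row vectors 'rV[R]_n; a linear subspace of R^n is the
   row space of a square matrix H : 'M[R]_n (membership: (x <= H)%MS),
   its dimension is \rank H. *)

Definition dotv (R : realType) (n : nat) (x y : 'rV[R]_n) : R := (x *m y^T) 0 0.
Definition enorm (R : realType) (n : nat) (x : 'rV[R]_n) : R := Num.sqrt (dotv x x).

(* Orthogonal complement H^perp: all u with u *m H^T = 0, i.e. u orthogonal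
   to every row (hence every vector) of H. *)
Definition orthc (R : realType) (n : nat) (H : 'M[R]_n) : 'M[R]_n := kermx H^T.

Definition orth_sub (R : realType) (n : nat) (A B : 'M[R]_n) : Prop :=
  forall x y : 'rV[R]_n, (x <= A)%MS -> (y <= B)%MS -> dotv x y = 0.

Definition sphere (R : realType) (n : nat) (c : 'rV[R]_n) (r : R) : set 'rV[R]_n :=
  [set x | enorm (x - c) = r].

Definition usphere (R : realType) (n : nat) : set 'rV[R]_n := sphere 0 1.

Definition rotation_fixing (R : realType) (n : nat) (H Q : 'M[R]_n) : Prop :=
  [/\ Q *m Q^T = 1%:M, \det Q = 1 &
      forall x : 'rV[R]_n, (x <= H)%MS -> x *m Q = x].

Definition union_of_origin_spheres (R : realType) (n : nat) (X : set 'rV[R]_n) : Prop :=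
  exists Rd : set R, (forall r, Rd r -> 0 <= r) /\
    X = \bigcup_(r in Rd) sphere 0 r.

Definition rot_symmetric (R : realType) (n : nat) (H : 'M[R]_n) (X : set 'rV[R]_n) : Prop :=
  forall x : 'rV[R]_n, (x <= H)%MS ->
    exists Rd : set R, (forall r, Rd r -> 0 <= r) /\
      X `&` [set y | (y - x <= orthc H)%MS] =
      \bigcup_(r in Rd) ([set y | (y - x <= orthc H)%MS] `&` sphere x r).

Definition convex_set_rV (R : realType) (n : nat) (K : set 'rV[R]_n) : Prop :=
  forall x y (t : R), 0 <= t -> t <= 1 -> K x -> K y -> K (t *: x + (1 - t) *: y).

Definition convex_body (R : realType) (n : nat) (K : set 'rV[R]_n) : Prop :=
  [/\ compact K, convex_set_rV K & K° !=set0].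

Definition ceil_div (a b : nat) : nat := (a + b.-1) %/ b.

(* Main.v *)
Require Import Defs.
From HB Require Import structures.
From mathcomp Require Import all_boot all_order all_algebra.
From mathcomp Require Import all_classical all_reals all_analysis.
From mathcomp Require Import zify ring lra.
Import Order.TTheory GRing.Theory Num.Theory.
Import numFieldNormedType.Exports.
Local Open Scope classical_set_scope.
Local Open Scope ring_scope.
Set Implicit Arguments. Unset Strict Implicit. Unset Printing Implicit Defensive.

Lemma sum_pick (R : realType) m (F : 'I_m -> R) a :
  \sum_c F c * (c == a)%:R = F a.
Proof.
rewrite (bigD1 a) //= eqxx mulr1 big1 ?addr0 // => c /negbTE ->.
by rewrite mulr0.
Qed.


Section Lin.
Variable R : realType.

Lemma dotvE' m (x y : 'rV[R]_m) : dotv x y = \sum_c x 0 c * y 0 c.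
Proof. by rewrite /dotv !mxE; apply: eq_bigr => c _; rewrite mxE. Qed.

Lemma dotvC m (x y : 'rV[R]_m) : dotv x y = dotv y x.
Proof. by rewrite !dotvE'; apply: eq_bigr => c _; rewrite mulrC. Qed.

Lemma dotvBl m (x y z : 'rV[R]_m) : dotv (x - y) z = dotv x z - dotv y z.
Proof. by rewrite !dotvE' -sumrB; apply: eq_bigr => c _; rewrite !mxE; ring. Qed.

Lemma dotvZl m a (x z : 'rV[R]_m) : dotv (a *: x) z = a * dotv x z.
Proof. by rewrite !dotvE' mulr_sumr; apply: eq_bigr => c _; rewrite !mxE; ring. Qed.

Lemma dotvBr m (x y z : 'rV[R]_m) : dotv z (x - y) = dotv z x - dotv z y.
Proof. by rewrite ![dotv z _]dotvC dotvBl. Qed.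

Lemma dotvZr m a (x z : 'rV[R]_m) : dotv z (a *: x) = a * dotv z x.
Proof. by rewrite ![dotv z _]dotvC dotvZl. Qed.

Lemma dotv_ge0' m (x : 'rV[R]_m) : 0 <= dotv x x.
Proof. by rewrite dotvE'; apply: sumr_ge0 => c _; rewrite -expr2 sqr_ge0. Qed.

Lemma dotv_eq0 m (x : 'rV[R]_m) : dotv x x = 0 -> x = 0.
Proof.
rewrite dotvE' => /eqP; rewrite psumr_eq0 => [/allP h|c _]; last first.
  by rewrite -expr2 sqr_ge0.
apply/rowP => c; rewrite mxE; have := h c (mem_index_enum c).
by rewrite implyTb -expr2 sqrf_eq0 => /eqP.
Qed.

Lemma det_1_sub m (u w : 'rV[R]_m) :
  \det (1%:M - u^T *m w) = 1 - (w *m u^T) 0 0.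
Proof.
pose M := block_mx (1%:M : 'M[R]_1) w u^T 1%:M.
have e1 : block_mx (1%:M : 'M[R]_1) 0 u^T 1%:M *m
          block_mx (1%:M : 'M[R]_1) w 0 (1%:M - u^T *m w) = M.
  rewrite mulmx_block ?mul1mx ?mulmx1 ?mul0mx ?mulmx0 ?addr0 ?add0r.
  by rewrite addrC subrK.
have e2 : block_mx (1%:M - w *m u^T : 'M[R]_1) w 0 1%:M *m
          block_mx (1%:M : 'M[R]_1) 0 u^T 1%:M = M.
  rewrite mulmx_block ?mul1mx ?mulmx1 ?mul0mx ?mulmx0 ?addr0 ?add0r.
  by rewrite subrK.
have h1 := congr1 determinant e1; have h2 := congr1 determinant e2.
rewrite det_mulmx det_lblock det_ublock !det1 !mul1r in h1.
rewrite det_mulmx det_lblock det_ublock !det1 !mulr1 det_mx11 in h2.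
by rewrite h1 -h2 !mxE.
Qed.

Definition refl m (v : 'rV[R]_m) : 'M[R]_m :=
  1%:M - (2 / dotv v v) *: (v^T *m v).

Lemma mulmx_refl m (h v : 'rV[R]_m) :
  h *m refl v = h - (2 / dotv v v * dotv h v) *: v.
Proof.
rewrite /refl mulmxBr mulmx1 -scalemxAr mulmxA (mx11_scalar (h *m v^T)).
by rewrite mul_scalar_mx scalerA.
Qed.

Lemma refl_tr m (v : 'rV[R]_m) : (refl v)^T = refl v.
Proof. by rewrite /refl linearB /= trmx1 linearZ /= trmx_mul trmxK. Qed.

Lemma refl_invol m (v : 'rV[R]_m) : dotv v v != 0 -> refl v *m refl v = 1%:M.
Proof.
move=> hD; apply/row_matrixP => r.
rewrite -[refl v *m refl v]mul1mx row_mul mulmxA !mulmx_refl.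
set h := row r 1%:M.
rewrite dotvBl dotvZl -addrA -opprD -scalerDl.
suff -> : 2 / dotv v v * dotv h v +
    2 / dotv v v * (dotv h v - 2 / dotv v v * dotv h v * dotv v v) = 0.
  by rewrite scale0r subr0.
by field.
Qed.

Lemma det_refl m (v : 'rV[R]_m) : dotv v v != 0 -> \det (refl v) = -1.
Proof.
move=> hD.
have -> : refl v = 1%:M - ((2 / dotv v v) *: v)^T *m v.
  by rewrite /refl; congr (_ - _); rewrite scalemxAl; congr (_ *m _); apply/matrixP => a b; rewrite !mxE.
rewrite det_1_sub linearZ /= -scalemxAr mxE.
rewrite (_ : (v *m v^T) 0 0 = dotv v v) // -mulrA mulVf // mulr1; lra.
Qed.

Lemma refl_fix m (h v : 'rV[R]_m) : dotv h v = 0 -> h *m refl v = h.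
Proof. by move=> e; rewrite mulmx_refl e mulr0 scale0r subr0. Qed.

Lemma refl_map m (x y : 'rV[R]_m) : dotv x x = dotv y y -> x != y ->
  x *m refl (x - y) = y.
Proof.
move=> hxy nxy.
have hD : dotv (x - y) (x - y) != 0.
  by apply: contra nxy => /eqP /dotv_eq0 /eqP; rewrite subr_eq0.
rewrite mulmx_refl.
have e : 2 / dotv (x - y) (x - y) * dotv x (x - y) = 1.
  have hDv : dotv (x - y) (x - y) = 2 * (dotv x x - dotv x y).
    by rewrite !dotvBl !dotvBr (dotvC y x) -hxy; ring.
  have hxv : dotv x (x - y) = dotv x x - dotv x y by rewrite dotvBr.
  have hne : dotv x x - dotv x y != 0.
    by apply: contra hD; rewrite hDv => /eqP ->; rewrite mulr0.
  by rewrite hDv hxv; field.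
by rewrite e scale1r opprB addrC subrK.
Qed.


Lemma orthcP m (H : 'M[R]_m) (v : 'rV[R]_m) :
  (v <= orthc H)%MS -> v *m H^T = 0.
Proof. by rewrite /orthc sub_kermx => /eqP. Qed.

Lemma orth_row m (H : 'M[R]_m) (h v : 'rV[R]_m) :
  (h <= H)%MS -> v *m H^T = 0 -> dotv h v = 0.
Proof.
move=> /submxP [D ->] hv.
rewrite /dotv -mulmxA (_ : H *m v^T = 0) ?mulmx0 ?mxE //.
by rewrite -[H]trmxK -trmx_mul hv trmx0.
Qed.


Lemma dotvDr m (x y z : 'rV[R]_m) : dotv z (x + y) = dotv z x + dotv z y.
Proof. by rewrite !dotvE' -big_split; apply: eq_bigr => c _; rewrite !mxE /= mulrDr. Qed.

Lemma dotvDl m (x y z : 'rV[R]_m) : dotv (x + y) z = dotv x z + dotv y z.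
Proof. by rewrite ![dotv (_ + _) _]dotvC dotvDr !(dotvC z). Qed.

Lemma dotv_ee m (a b : 'I_m) : dotv ('e_a : 'rV[R]_m) 'e_b = (a == b)%:R.
Proof.
rewrite dotvE' (eq_bigr (fun c => (a == b)%:R * (c == a)%:R)) ?sum_pick //.
move=> c _; rewrite !mxE /=; case: (c =P a) => [->|_] /=.
  by rewrite mulr1 mul1r.
by rewrite !mul0r mulr0.
Qed.

End Lin.

Section S.
Variable R : realType.
Variables p i : nat.
Hypothesis hi1 : (1 <= i)%N.
Hypothesis hi2 : (i <= p.+1 - 2)%N.
Local Notation n := p.+1.
Local Notation d := (p.+1 - i)%N.
Local Notation k := (ceil_div p.+1 (p.+1 - i)).

Definition sj (j : nat) := minn (j * d) i.
Definition inB (j : nat) (c : 'I_n) : bool := (sj j <= c < sj j + d)%N.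
Definition bo (j : nat) : 'I_n := inord (sj j + d.-1).
Definition so (j : nat) : 'I_n := inord (sj j).
Definition o1 : 'I_n := inord 1.
Definition eps (j : nat) (r : 'I_n) : R := ((j != 0%N) && (r == ord0))%:R.
Definition Hm (j : nat) : 'M[R]_n :=
  \matrix_(r, c) ((~~ inB j r)%:R * ((r == c)%:R - eps j r * (c == bo j)%:R)).

Lemma d2 : (2 <= d)%N. Proof. lia. Qed.
Lemma sj_le j : (sj j <= i)%N. Proof. rewrite /sj; lia. Qed.
Lemma sj0 : sj 0 = 0%N. Proof. by rewrite /sj mul0n min0n. Qed.
Lemma sj_pos j : (0 < j)%N -> (1 <= sj j)%N.
Proof. move=> hj; rewrite /sj; have := d2; nia. Qed.
Lemma val_bo j : (bo j : nat) = (sj j + d.-1)%N.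
Proof. rewrite /bo inordK //; have := sj_le j; lia. Qed.
Lemma val_so j : (so j : nat) = sj j.
Proof. rewrite /so inordK //; have := sj_le j; lia. Qed.
Lemma val_o1 : (o1 : nat) = 1%N.
Proof. rewrite /o1 inordK //; lia. Qed.
Lemma inB0 c : inB 0 c = (c < d)%N.
Proof. by rewrite /inB sj0. Qed.
Lemma inB_bo j : inB j (bo j).
Proof. rewrite /inB val_bo; have := d2; lia. Qed.
Lemma inB_so j : inB j (so j).
Proof. rewrite /inB val_so; have := d2; lia. Qed.
Lemma bo_so j : bo j != so j.
Proof. apply/eqP => /(congr1 (@nat_of_ord _)); rewrite val_bo val_so; have := d2; lia. Qed.
Lemma bo_0 j : (0 < j)%N -> bo j != ord0.
Proof. move=> /sj_pos; move=> h; apply/eqP => /(congr1 (@nat_of_ord _)); rewrite val_bo /=; lia. Qed.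
Lemma bo_1 j : (0 < j)%N -> bo j != o1.
Proof. move=> /sj_pos h; apply/eqP => /(congr1 (@nat_of_ord _)); rewrite val_bo val_o1; have := d2; lia. Qed.
Lemma so_0 j : (0 < j)%N -> so j != ord0.
Proof. move=> /sj_pos h; apply/eqP => /(congr1 (@nat_of_ord _)); rewrite val_so /=; lia. Qed.
Lemma nB_0 j : (0 < j)%N -> ~~ inB j ord0.
Proof. move=> /sj_pos h; rewrite /inB /=; lia. Qed.
Lemma inB0_0 : inB 0 ord0. Proof. rewrite inB0 /=; have := d2; lia. Qed.
Lemma inB0_1 : inB 0 o1. Proof. rewrite inB0 val_o1; have := d2; lia. Qed.
Lemma o1_0 : o1 != ord0.
Proof. apply/eqP => /(congr1 (@nat_of_ord _)); rewrite val_o1 /=; lia. Qed.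

Lemma cover (c : 'I_n) : ~~ inB 0 c -> exists j : 'I_k, (0 < j)%N /\ inB j c.
Proof.
rewrite inB0 -leqNgt => hc.
have hd := d2.
have hlt : (c %/ d < k)%N.
  rewrite /ceil_div leq_divRL; last lia.
  have := leq_trunc_div c d; have := ltn_ord c; rewrite mulSn; lia.
exists (Ordinal hlt) => /=; split.
  by rewrite divn_gt0 //; lia.
rewrite /inB /sj.
have h1 := leq_trunc_div c d.
have h2 : (c < (c %/ d).+1 * d)%N by rewrite ltn_ceil //; lia.
have := ltn_ord c; rewrite mulSn in h2; lia.
Qed.


Lemma k_pos : (0 < k)%N.
Proof. rewrite /ceil_div divn_gt0; have := d2; lia. Qed.
Definition j0 : 'I_k := Ordinal k_pos.

Lemma dotvE (x y : 'rV[R]_n) : dotv x y = \sum_c x 0 c * y 0 c.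
Proof. by rewrite /dotv !mxE; apply: eq_bigr => c _; rewrite mxE. Qed.

Lemma inP j (v : 'rV[R]_n) :
  (forall r, ~~ inB j r -> v 0 r = eps j r * v 0 (bo j)) ->
  (v <= orthc (Hm j))%MS.
Proof.
move=> hv; rewrite /orthc sub_kermx; apply/eqP/rowP => r; rewrite !mxE.
under eq_bigr do rewrite !mxE.
case hr: (inB j r) => /=.
  by rewrite big1 // => c _; rewrite mul0r mulr0.
transitivity (\sum_c v 0 c * (c == r)%:R - eps j r * \sum_c v 0 c * (c == bo j)%:R).
  rewrite mulr_sumr -sumrB; apply: eq_bigr => c _; rewrite mul1r (eq_sym r c); ring.
by rewrite !sum_pick hv ?hr //; ring.
Qed.

Definition closedE (E : set 'rV[R]_n) := forall (j : 'I_k) x y,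
  E x -> dotv y y = dotv x x -> (y - x <= orthc (Hm j))%MS -> E y.

Section Moves.
Variable E : set 'rV[R]_n.
Hypothesis hE : closedE E.

Lemma moveP (j : 'I_k) x y : E x -> dotv y y = dotv x x ->
  (forall r, ~~ inB j r -> (y - x) 0 r = eps j r * (y - x) 0 (bo j)) -> E y.
Proof. move=> Ex hd hv; apply: (hE Ex hd); exact: (inP hv). Qed.

Definition Fl (x : 'rV[R]_n) : 'rV[R]_n :=
  \row_c (if (c == ord0) || (c == o1) then - x 0 c else x 0 c).

Lemma dotv_Fl x : dotv (Fl x) (Fl x) = dotv x x.
Proof.
rewrite !dotvE; apply: eq_bigr => c _; rewrite !mxE.
by case: ifP => _ //; rewrite mulrNN.
Qed.

Lemma FlK x : Fl (Fl x) = x.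
Proof. by apply/rowP => c; rewrite !mxE; case: ((c == ord0) || (c == o1)); rewrite ?opprK. Qed.

Lemma Fl_diff x y r : (Fl y - Fl x) 0 r =
  if (r == ord0) || (r == o1) then - (y - x) 0 r else (y - x) 0 r.
Proof. rewrite !mxE; case: ((r == ord0) || (r == o1)) => //; ring. Qed.

Lemma E_Fl x : E x -> E (Fl x).
Proof.
move=> Ex; apply: (moveP (j := j0) Ex); first exact: dotv_Fl.
move=> r hr; rewrite /eps /= mul0r !mxE.
have [h|] := boolP ((r == ord0) || (r == o1)).
  by move: hr; case/orP: h => /eqP ->; rewrite ?inB0_0 ?inB0_1.
by move=> _ /=; rewrite subrr.
Qed.

Lemma moveF (j : 'I_k) x y : (0 < j)%N -> E x -> dotv y y = dotv x x ->
  (forall r, ~~ inB j r -> r != ord0 -> (y - x) 0 r = 0) ->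
  (y - x) 0 ord0 = - (y - x) 0 (bo j) -> E y.
Proof.
move=> hj Ex hd hv h0.
rewrite -(FlK y); apply: E_Fl.
apply: (moveP (j := j) (E_Fl Ex)); first by rewrite !dotv_Fl.
move=> r hr; rewrite !Fl_diff /eps.
have hb0 := bo_0 hj; have hb1 := bo_1 hj.
rewrite (negbTE hb0) (negbTE hb1) /=.
have -> : (j != 0%N :> nat) by rewrite -lt0n.
have [->|r0] := eqP.
  by rewrite /= mul1r h0 opprK.
rewrite /= mul0r hv //; last exact/eqP.
by case: ifP => _; rewrite ?oppr0.
Qed.

Definition upd (b c : 'I_n) (x : 'rV[R]_n) (a0 ab ac : R) : 'rV[R]_n :=
  \row_r (if r == ord0 then a0 else if r == b then ab else if r == c then ac
          else x 0 r).

Lemma dotv_upd b c x a0 ab ac : ord0 != b -> ord0 != c -> b != c ->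
  dotv (upd b c x a0 ab ac) (upd b c x a0 ab ac) =
  dotv x x + (a0 ^+ 2 - x 0 ord0 ^+ 2) + (ab ^+ 2 - x 0 b ^+ 2)
           + (ac ^+ 2 - x 0 c ^+ 2).
Proof.
move=> h0b h0c hbc; rewrite !dotvE.
have e : forall r, (upd b c x a0 ab ac) 0 r * (upd b c x a0 ab ac) 0 r =
  x 0 r * x 0 r + (a0 ^+ 2 - x 0 ord0 ^+ 2) * (r == ord0)%:R
   + (ab ^+ 2 - x 0 b ^+ 2) * (r == b)%:R + (ac ^+ 2 - x 0 c ^+ 2) * (r == c)%:R.
  move=> r; rewrite !mxE.
  have [->|r0] := eqP; first by move: h0b h0c => /negbTE -> /negbTE ->; rewrite /= mulr1 !mulr0; ring.
  have [->|rb] := eqP; first by rewrite (negbTE hbc) /= mulr1 !mulr0; ring.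
  have [->|rc] := eqP; first by rewrite /= mulr1 !mulr0; ring.
  by rewrite /= !mulr0 !addr0.
rewrite (eq_bigr _ (fun r _ => e r)) !big_split /=.
by rewrite (sum_pick (fun _ => _)) (sum_pick (fun _ => _)) (sum_pick (fun _ => _)).
Qed.

Lemma updK b c x : upd b c x (x 0 ord0) (x 0 b) (x 0 c) = x.
Proof.
apply/rowP => r; rewrite !mxE.
by do 3 (case: eqP => [->|_] //).
Qed.

Lemma upd_diff b c x a0 ab ac a0' ab' ac' r :
  (upd b c x a0' ab' ac' - upd b c x a0 ab ac) 0 r =
  if r == ord0 then a0' - a0 else if r == b then ab' - ab
  else if r == c then ac' - ac else 0.
Proof. by rewrite !mxE; do 3 (case: ifP => _ //); rewrite subrr. Qed.


Lemma nB_c (j : nat) (c : 'I_n) : (0 < j)%N -> inB j c -> ord0 != c.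
Proof. by move=> hj hc; apply/eqP => e; move: hc; rewrite -e (negbTE (nB_0 hj)). Qed.

Lemma stepU (j : 'I_k) (c : 'I_n) x a0 ab ac a0' ab' ac' :
  (0 < j)%N -> inB j c -> c != bo j ->
  E (upd (bo j) c x a0 ab ac) ->
  a0' ^+ 2 + ab' ^+ 2 + ac' ^+ 2 = a0 ^+ 2 + ab ^+ 2 + ac ^+ 2 ->
  (a0' - a0 = ab' - ab \/ a0' - a0 = - (ab' - ab)) ->
  E (upd (bo j) c x a0' ab' ac').
Proof.
move=> hj hc hcb Ey hsq hcase.
have h0b : ord0 != bo j by rewrite eq_sym bo_0.
have h0c : ord0 != c := nB_c hj hc.
have hbc : bo j != c by rewrite eq_sym.
have hd : dotv (upd (bo j) c x a0' ab' ac') (upd (bo j) c x a0' ab' ac') =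
          dotv (upd (bo j) c x a0 ab ac) (upd (bo j) c x a0 ab ac).
  rewrite !dotv_upd //; lra.
have hjn : (j != 0%N :> nat) by rewrite -lt0n.
case: hcase => hc'.
  apply: (moveP Ey hd) => r hr; rewrite !upd_diff.
  have rb : (r == bo j) = false.
    by apply/negbTE; apply: contraNneq hr => ->; exact: inB_bo.
  have rc : (r == c) = false.
    by apply/negbTE; apply: contraNneq hr => ->.
  rewrite rb rc eqxx (negbTE (bo_0 hj)) /eps hjn /=.
  by case: eqP => _; rewrite ?mul1r ?mul0r.
apply: (moveF hj Ey hd) => [r hr r0|].
  rewrite !upd_diff (negbTE r0).
  have rb : (r == bo j) = false.
    by apply/negbTE; apply: contraNneq hr => ->; exact: inB_bo.
  have rc : (r == c) = false.
    by apply/negbTE; apply: contraNneq hr => ->.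
  by rewrite rb rc.
by rewrite !upd_diff eqxx eq_sym (negbTE h0b) eqxx.
Qed.

Lemma sqrtK (a : R) : 0 <= a -> Num.sqrt a ^+ 2 = a.
Proof. exact: sqr_sqrtr. Qed.

Lemma opE (j : 'I_k) (c : 'I_n) x : (0 < j)%N -> inB j c -> c != bo j ->
  E x -> E (upd (bo j) c x
     (Num.sqrt (x 0 ord0 ^+ 2 + x 0 (bo j) ^+ 2 + x 0 c ^+ 2)) 0 0).
Proof.
move=> hj hc hcb Ex.
set x0 := x 0 ord0; set xb := x 0 (bo j); set xc := x 0 c.
have E0 : E (upd (bo j) c x x0 xb xc) by rewrite updK.
set a := x0 - xb.
have p1 : 0 <= (x0 + xb) ^+ 2 / 2 + xc ^+ 2.
  by apply: addr_ge0; [apply: divr_ge0; rewrite ?sqr_ge0 |rewrite sqr_ge0].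
set s1 := Num.sqrt ((x0 + xb) ^+ 2 / 2 + xc ^+ 2).
have hs1 : s1 ^+ 2 = (x0 + xb) ^+ 2 / 2 + xc ^+ 2 by rewrite sqrtK.
have E1 : E (upd (bo j) c x (a / 2) (- (a / 2)) s1).
  apply: (stepU hj hc hcb E0); first by rewrite hs1 /a; field.
  by left; rewrite /a; field.
have p2 : 0 <= x0 ^+ 2 + xb ^+ 2 + xc ^+ 2 by rewrite !addr_ge0 ?sqr_ge0.
set Rr := Num.sqrt (x0 ^+ 2 + xb ^+ 2 + xc ^+ 2).
have hR : Rr ^+ 2 = x0 ^+ 2 + xb ^+ 2 + xc ^+ 2 by rewrite sqrtK.
have E2 : E (upd (bo j) c x 0 0 Rr).
  apply: (stepU hj hc hcb E1); first by rewrite hR hs1 /a; field.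
  by right; rewrite /a; field.
have p3 : 0 <= Rr ^+ 2 / 2 by apply: divr_ge0; rewrite ?sqr_ge0.
set s3 := Num.sqrt (Rr ^+ 2 / 2).
have hs3 : s3 ^+ 2 = Rr ^+ 2 / 2 by rewrite sqrtK.
have E3 : E (upd (bo j) c x (Rr / 2) (Rr / 2) s3).
  apply: (stepU hj hc hcb E2); first by rewrite hs3; field.
  by left; field.
apply: (stepU hj hc hcb E3); first by rewrite hs3; field.
by right; field.
Qed.

Lemma dotv_ge0 (x : 'rV[R]_n) : 0 <= dotv x x.
Proof. by rewrite dotvE; apply: sumr_ge0 => c _; rewrite -expr2 sqr_ge0. Qed.

Lemma clear_upto x t : E x -> exists y, [/\ E y, dotv y y = dotv x x &
  forall r : 'I_n, (r < t)%N -> ~~ inB 0 r -> y 0 r = 0].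
Proof.
elim: t => [|t IH] Ex.
  by exists x; split => // r; rewrite ltn0.
have [y [Ey hy hz]] := IH Ex.
case ht: (t < n)%N; last first.
  exists y; split => // r hr; apply: hz; have := ltn_ord r; move: ht hr; lia.
pose r0 : 'I_n := Ordinal ht.
case hB: (inB 0 r0).
  exists y; split => // r hr hrB; have [lt|eq] : (r < t)%N \/ r = r0.
    have [h|h] : (r < t)%N \/ (nat_of_ord r = t).
      move: hr; lia.
    by left. by right; apply/val_inj.
  exact: hz. by move: hrB; rewrite eq hB.
have [j [hj hjr]] := cover (negbT hB).
pose c := if r0 == bo j then so j else r0.
have hc : inB j c by rewrite /c; case: eqP => _ //; exact: inB_so.
have hcb : c != bo j.
  by rewrite /c; case: (r0 =P bo j) => [_|/eqP //]; rewrite eq_sym bo_so.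
have h0b : ord0 != bo j by rewrite eq_sym bo_0.
have h0c : ord0 != c := nB_c hj hc.
have hbc : bo j != c by rewrite eq_sym.
exists (upd (bo j) c y
     (Num.sqrt (y 0 ord0 ^+ 2 + y 0 (bo j) ^+ 2 + y 0 c ^+ 2)) 0 0); split.
- exact: opE.
- by rewrite dotv_upd // sqrtK ?hy; [ring | rewrite !addr_ge0 ?sqr_ge0].
move=> r hr hrB; rewrite mxE.
have r0n : (r == ord0) = false.
  by apply/negbTE; apply: contraNneq hrB => ->; exact: inB0_0.
rewrite r0n.
case: eqP => // rb; case: eqP => // rc.
have hrr0 : r != r0.
  apply/eqP => e; move: rb rc; rewrite /c e; case: eqP => //.
apply: hz => //.
have : (nat_of_ord r != t) by apply: contra hrr0 => /eqP e; apply/eqP/val_inj.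
move: hr; lia.
Qed.

Definition e0 : 'rV[R]_n := delta_mx 0 ord0.

Lemma dotv_se0 (a : R) : dotv (a *: e0) (a *: e0) = a ^+ 2.
Proof.
rewrite dotvE (eq_bigr (fun r => a ^+ 2 * (r == ord0)%:R)) ?sum_pick //.
move=> r _; rewrite !mxE /= eq_sym; case: eqP => _ /=; rewrite ?mulr1 ?mulr0 ?expr2 //.
Qed.

Lemma key1 x : E x -> E (Num.sqrt (dotv x x) *: e0).
Proof.
move=> Ex; have [y [Ey hy hz]] := clear_upto n Ex.
apply: (moveP (j := j0) Ey).
  by rewrite dotv_se0 sqrtK ?dotv_ge0 // hy.
move=> r hr; rewrite /eps /= mul0r !mxE hz //.
have -> : (r == ord0) = false.
  by apply/negbTE; apply: contraNneq hr => ->; exact: inB0_0.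
by rewrite andbF /= mulr0 subr0.
Qed.

End Moves.

Lemma closedC (E : set 'rV[R]_n) : closedE E -> closedE (fun z => ~ E z).
Proof.
move=> hE j a b na hab hsub Eb; apply: na.
apply: (hE j b a Eb (esym hab)).
by rewrite -opprB -scaleN1r; apply: scalemx_sub.
Qed.

Lemma key (E : set 'rV[R]_n) x y : closedE E -> E x ->
  dotv y y = dotv x x -> E y.
Proof.
move=> hE Ex hxy; apply: contrapT => nEy.
have := key1 (closedC hE) nEy; rewrite hxy; apply.
exact: key1.
Qed.


Definition Dm (S : {set 'I_n}) : 'M[R]_n := diag_mx (\row_c (c \in S)%:R).

Lemma Dm_sum S : Dm S = \sum_(c in S) delta_mx c c.
Proof.
apply/matrixP => r t; rewrite summxE !mxE.
case rS: (r \in S).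
  rewrite (bigD1 r) //= big1 ?addr0; first by rewrite mxE eqxx eq_sym; case: (r == t).
  by move=> c /andP [_ /negbTE cr]; rewrite mxE eq_sym cr.
rewrite big1 ?mul0rn //= => c cS; rewrite mxE.
have -> : (r == c) = false by apply/negbTE; apply: contraTneq cS => <-; rewrite rS.
by [].
Qed.

Lemma rank_Dm_le S : (\rank (Dm S) <= #|S|)%N.
Proof.
rewrite Dm_sum -sum1_card.
apply: (big_ind2 (fun (A : 'M[R]_n) (m : nat) => (\rank A <= m)%N)).
- by rewrite mxrank0.
- move=> A a B b hA hB; apply: leq_trans (mxrank_add _ _) _; exact: leq_add.
- by move=> c _; rewrite mxrank_delta.
Qed.

Lemma Dm_add S : Dm S + Dm (~: S) = 1%:M.
Proof.
apply/matrixP => r t; rewrite !mxE !inE.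
by case: (r \in S); case: (r == t); rewrite /= ?addr0 ?add0r.
Qed.

Lemma rank_Dm S : \rank (Dm S) = #|S|.
Proof.
have := mxrank_add (Dm S) (Dm (~: S)); rewrite Dm_add mxrank1.
have h1 := rank_Dm_le S; have h2 := rank_Dm_le (~: S).
have := cardsC S; rewrite card_ord; lia.
Qed.

Definition Um (j : nat) : 'M[R]_n :=
  1%:M - ((j != 0%N)%:R : R) *: delta_mx ord0 (bo j).

Lemma Um_unit j : Um j \in unitmx.
Proof.
rewrite /Um; case: (j =P 0%N) => [->|/eqP hj].
  by rewrite /= scale0r subr0 unitmx1.
have hj' : (0 < j)%N by rewrite lt0n.
have := @mulmx1_unit _ _ (Um j) (1%:M + delta_mx ord0 (bo j)).
rewrite /Um hj /= scale1r => h; apply: (proj1 (h _)).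

rewrite mulmxDr mulmx1 mulmxBl mul1mx mul_delta_mx_cond (negbTE (bo_0 hj')).
by rewrite mulr0n subr0 subrK.
Qed.

Lemma Hm_DU j : Hm j = Dm [set r | ~~ inB j r] *m Um j.
Proof.
apply/matrixP => r c; rewrite !mxE (bigD1 r) //= big1 ?addr0; last first.
  by move=> t /negbTE tr; rewrite !mxE eq_sym tr mulr0n mul0r.
rewrite !mxE inE eqxx /= /eps.
congr (_ * _); congr (_ - _).
case: (j != 0%N); case: (r == ord0); rewrite /= ?mul0r ?mul1r // eq_sym //.
Qed.

Lemma card_B j : #|[set r : 'I_n | inB j r]%SET| = d.
Proof.
have hs := sj_le j.
have -> : [set r : 'I_n | inB j r]%SET =
    [set (inord (sj j + nat_of_ord t) : 'I_n) | t : 'I_d]%SET.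
  apply/setP => r; rewrite inE; apply/idP/imsetP.
    move=> h; have lt : (r - sj j < d)%N by move: h; rewrite /inB; lia.
    exists (Ordinal lt) => //; apply/val_inj; rewrite /= inordK; move: h; rewrite /inB; lia.
  by case=> t _ ->; rewrite /inB inordK; have := ltn_ord t; lia.
rewrite card_imset ?card_ord // => a b /(congr1 (@nat_of_ord _)).
rewrite !inordK; [move=> h; apply/val_inj => /=; lia| |]; have := ltn_ord a; have := ltn_ord b; lia.
Qed.

Lemma rank_Hm j : \rank (Hm j) = i.
Proof.
rewrite Hm_DU mxrankMfree ?row_free_unit ?Um_unit // rank_Dm.
have -> : [set r | ~~ inB j r]%SET = ~: [set r | inB j r]%SET.
  by apply/setP => r; rewrite !inE.
have := cardsC [set r | inB j r]%SET; rewrite card_B card_ord; move=> H; apply/eqP; rewrite -(eqn_add2l d) H; apply/eqP; lia.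
Qed.

Lemma rot_exists (j : 'I_k) x y : dotv y y = dotv x x ->
  (y - x <= orthc (Hm j))%MS -> x != y ->
  exists Q, rotation_fixing (Hm j) Q /\ x *m Q = y.
Proof.
move=> hd hsub nxy.
have hv : (x - y) *m (Hm j)^T = 0.
  by rewrite -opprB mulNmx (orthcP hsub) oppr0.
pose A := (col_mx (Hm j) y)^T.
have rK : (0 < \rank (kermx A))%N.
  rewrite mxrank_ker /A mxrank_tr.
  have := leq_of_leqif (mxrank_adds_leqif (Hm j) y).
  rewrite addsmxE rank_Hm; have := rank_leq_row y; move=> h1 h2; rewrite subn_gt0; apply: (leq_ltn_trans h2); apply: (leq_ltn_trans (leq_add (leqnn i) h1)); lia.
have [r hr] : exists r, row r (kermx A) != 0.
  apply: contrapT => hn; move: rK; rewrite lt0n mxrank_eq0 => /eqP; apply.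
  apply/row_matrixP => r; rewrite row0; apply/eqP; apply: contrapT => h.
  by apply: hn; exists r; apply/negP.
set w := row r (kermx A).
have hwA : w *m A = 0 by apply/eqP; rewrite -sub_kermx row_sub.
move: hwA; rewrite /A tr_col_mx mul_mx_row -row_mx0 => /eq_row_mx [hwH hwy].
have hDv : dotv (x - y) (x - y) != 0.
  by apply: contra nxy => /eqP /dotv_eq0 /eqP; rewrite subr_eq0.
have hDw : dotv w w != 0 by apply: contra hr => /eqP /dotv_eq0 /eqP.
exists (refl (x - y) *m refl w); split; last first.
  rewrite mulmxA refl_map // refl_fix //.
  by rewrite dotvC /dotv hwy mxE.
split.
- rewrite trmx_mul !refl_tr -mulmxA (mulmxA (refl w)) refl_invol // mul1mx.
  exact: refl_invol.
- by rewrite det_mulmx !det_refl // mulrNN mulr1.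
move=> h hh.
have h1 : dotv h (x - y) = 0 := orth_row hh hv.
have h2 : dotv h w = 0 := orth_row hh hwH.
by rewrite mulmxA !refl_fix.
Qed.

Lemma enorm_eq (x y : 'rV[R]_n) : enorm x = enorm y -> dotv x x = dotv y y.
Proof. by rewrite /enorm => e; rewrite -(sqrtK (dotv_ge0 x)) e sqrtK ?dotv_ge0. Qed.

Lemma part2 (E : set 'rV[R]_n) : E `<=` @usphere R n -> E !=set0 ->
  (forall (j : 'I_k) x y, E x -> @usphere R n y ->
     (y - x <= orthc (Hm j))%MS -> E y) -> E = @usphere R n.
Proof.
move=> hEs [x0 Ex0] hmv.
have hc : closedE E.
  move=> j x y Ex hd hsub; apply: (hmv j x y Ex _ hsub).
  have := hEs x Ex; rewrite /usphere /sphere /= !subr0 /enorm hd //.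
apply/seteqP; split => // y hy.
apply: (key hc Ex0).
have h1 := hEs x0 Ex0; move: hy h1; rewrite /usphere /sphere /= !subr0 => hy h1.
by apply: enorm_eq; rewrite hy h1.
Qed.

Lemma part3 (F : set 'rV[R]_n) :
  (forall (j : 'I_k) Q x, rotation_fixing (Hm j) Q -> F x -> F (x *m Q)) ->
  union_of_origin_spheres F.
Proof.
move=> hF.
have hc : closedE F.
  move=> j x y Fx hd hsub; case: (eqVneq x y) => [<-//|nxy].
  by have [Q [hQ <-]] := rot_exists hd hsub nxy; exact: hF hQ Fx.
exists [set r | exists2 x, F x & enorm x = r]; split.
  by move=> r [x _ <-]; exact: sqrtr_ge0.
apply/seteqP; split => [x Fx | y [r [x Fx <-] hy]].
  by exists (enorm x); [exists x | rewrite /sphere /= subr0].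
by apply: (key hc Fx); apply: enorm_eq; move: hy; rewrite /sphere /= subr0.
Qed.

Lemma e_in (j : 'I_k) (r : 'I_n) : inB j r ->
  (nat_of_ord j == 0%N) || (r != bo j) -> (('e_r : 'rV[R]_n) <= orthc (Hm j))%MS.
Proof.
move=> hr h; apply: inP => c hc; rewrite !mxE.
have -> : (c == r) = false by apply/negbTE; apply: contraNneq hc => ->.
rewrite /eps (eq_sym (bo j) r); case/orP: h => [/eqP -> | /negbTE ->]; rewrite /= ?mul0r ?mulr0 ?andbF //.
Qed.

Lemma e0b_in (j : 'I_k) : (0 < j)%N ->
  ((('e_ord0 : 'rV[R]_n) + 'e_(bo j))%R <= orthc (Hm j))%MS.
Proof.
move=> hj; apply: inP => c hc; rewrite !mxE.
have -> : (c == bo j) = false.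
  by apply/negbTE; apply: contraNneq hc => ->; exact: inB_bo.
rewrite eqxx (negbTE (bo_0 hj)) /eps.
have -> : (nat_of_ord j != 0%N) by rewrite -lt0n.
by rewrite eqxx /= addr0 add0r mulr1.
Qed.

Lemma e0_in : (('e_ord0 : 'rV[R]_n) <= orthc (Hm j0))%MS.
Proof. by apply: e_in; [exact: inB0_0 | rewrite eqxx]. Qed.

Lemma part1a : (\sum_(j < k) orthc (Hm j) == 1%:M)%MS.
Proof.
apply/andP; split; first exact: submx1.
apply/row_subP => r; rewrite row1.
case hB: (inB 0 r).
  by apply: (sumsmx_sup j0) => //; apply: e_in => //; rewrite eqxx.
have [j [hj hjr]] := cover (negbT hB).
case: (eqVneq r (bo j)) => [->|rb].
  have -> : 'e_(bo j) = ('e_ord0 + 'e_(bo j)) - 'e_ord0 :> 'rV[R]_n.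
    by rewrite addrAC subrr add0r.
  apply: addmx_sub.
    by apply: (sumsmx_sup j) => //; exact: e0b_in.
  by rewrite -scaleN1r; apply: scalemx_sub; apply: (sumsmx_sup j0) => //; exact: e0_in.
by apply: (sumsmx_sup j) => //; apply: e_in => //; rewrite rb orbT.
Qed.

Lemma not_orth (j : 'I_k) : (0 < j)%N ->
  ~ orth_sub (orthc (Hm j0)) (orthc (Hm j)) /\
  ~ orth_sub (orthc (Hm j)) (orthc (Hm j0)).
Proof.
move=> hj; have hb : (ord0 == bo j) = false by rewrite eq_sym (negbTE (bo_0 hj)).
split => h.
  have := h _ _ e0_in (e0b_in hj).
  rewrite dotvDr !dotv_ee eqxx hb addr0 => /eqP; by rewrite oner_eq0.
have := h _ _ (e0b_in hj) e0_in.
rewrite dotvDl !dotv_ee eqxx eq_sym hb addr0 => /eqP; by rewrite oner_eq0.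
Qed.

Lemma part1b : ~ (exists S : {set 'I_k},
  [/\ exists a, a \in S, exists b, b \notin S &
      forall a b, a \in S -> b \notin S ->
        orth_sub (orthc (Hm a)) (orthc (Hm b))]).
Proof.
case=> S [[a aS] [b bS] hS].
case: (boolP (j0 \in S)) => h0.
  have hb : (0 < b)%N.
    rewrite lt0n; apply: contraNneq bS => e.
    by have -> : b = j0 by apply: val_inj.
  exact: (not_orth hb).1 (hS _ _ h0 bS).
have ha : (0 < a)%N.
  rewrite lt0n; apply: contraNneq h0 => e.
  by have <- : a = j0 by apply: val_inj.
exact: (not_orth ha).2 (hS _ _ aS h0).
Qed.

Lemma Hm_entry j r c : Hm j r c =
  (~~ inB j r)%:R * ((r == c)%:R - eps j r * (c == bo j)%:R).
Proof. by rewrite mxE. Qed.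

Lemma mulHm j (z : 'rV[R]_n) col : (z *m Hm j) 0 col =
  (~~ inB j col)%:R * z 0 col -
  (col == bo j)%:R * ((~~ inB j ord0)%:R * (j != 0%N)%:R * z 0 ord0).
Proof.
rewrite mxE.
transitivity (\sum_r (z 0 r * (~~ inB j r)%:R) * (r == col)%:R -
   (col == bo j)%:R * \sum_r (z 0 r * (~~ inB j r)%:R * (j != 0%N)%:R) * (r == ord0)%:R).
  rewrite mulr_sumr -sumrB; apply: eq_bigr => r _; rewrite Hm_entry /eps.
  by case: (j != 0%N); case: (r == ord0); rewrite /= ; ring.
by rewrite !sum_pick; ring.
Qed.

Lemma pyth (u c : 'rV[R]_n) : dotv c (u - c) = 0 ->
  dotv (u - c) (u - c) = dotv u u - dotv c c.
Proof.
move=> h; move: (h); rewrite dotvBr => h'.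
rewrite dotvBl h subr0 dotvBr (dotvC u c); lra.
Qed.

Lemma closed_rot (K : set 'rV[R]_n) :
  (forall j : 'I_k, rot_symmetric (Hm j) K) -> closedE K.
Proof.
move=> hK j x y Kx hd hsub.
pose z : 'rV[R]_n :=
  \row_r (if r == ord0 then (x 0 ord0 - x 0 (bo j)) / 2 else x 0 r).
pose c := z *m Hm j.
have cH : (c <= Hm j)%MS := submxMl _ _.
have hxc : (x - c <= orthc (Hm j))%MS.
  have sub_e : forall (u v : 'rV[R]_n) r, (u - v) 0 r = u 0 r - v 0 r.
    by move=> u v r; rewrite !mxE.
  apply: inP => r hr; rewrite !sub_e !mulHm.
  have rb : (r == bo j) = false.
    by apply/negbTE; apply: contraNneq hr => ->; exact: inB_bo.
  rewrite hr rb (inB_bo j) eqxx /= !mul0r !mul1r subr0 sub0r opprK.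
  rewrite /z !mxE /eps.
  case: (r =P ord0) => [er|/eqP r0].
    have hj : (nat_of_ord j != 0%N).
      apply: contra hr => /eqP ej; rewrite er /inB ej sj0 /=; have := d2; lia.
    have h0 : ~~ inB j ord0 by rewrite -er.
    rewrite er eqxx hj h0 /=.
    by rewrite !mul1r; field.
  by rewrite /= ?andbF /= mul0r subrr.
have [Rd [Rd0 hRd]] := hK j c cH.
have : (K `&` [set y | (y - c <= orthc (Hm j))%MS]) x by split.
rewrite hRd => -[r Rdr [_ hxr]].
have hyc : (y - c <= orthc (Hm j))%MS.
  have -> : y - c = (y - x) + (x - c) by rewrite addrA subrK.
  exact: addmx_sub.
have : (\bigcup_(r in Rd) ([set y | (y - c <= orthc (Hm j))%MS] `&` sphere c r)) y.
  exists r => //; split => //; rewrite /sphere /=.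
  rewrite -hxr /enorm pyth ?pyth ?hd //.
    exact: orth_row cH (orthcP hxc).
  exact: orth_row cH (orthcP hyc).
by rewrite -hRd => -[].
Qed.

Lemma dotv_cont : continuous (fun x : 'rV[R]_n => dotv x x).
Proof.
have -> : (fun x : 'rV[R]_n => dotv x x) =
    (fun x => \sum_(c <- index_enum 'I_n) x 0 c * x 0 c).
  by apply/funext => x; rewrite dotvE.
elim: (index_enum _) => [|c s IH].
  under eq_fun do rewrite big_nil.
  exact: cst_continuous.
under eq_fun do rewrite big_cons.
move=> x; apply: (@continuousD _ _ _ (fun y : 'rV[R]_n => y 0 c * y 0 c) (fun y => \sum_(c <- s) y 0 c * y 0 c) x); last exact: IH.
by apply: continuousM; exact: (@coord_continuous R 1 n 0 c x).
Qed.

Lemma part4 (K : set 'rV[R]_n) : convex_body K ->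
  (forall j : 'I_k, rot_symmetric (Hm j) K) ->
  exists r : R, 0 < r /\ K = [set x | enorm x <= r].
Proof.
move=> [cK cvK [x0 ix0]] hK.
have hc := closed_rot hK.
have Kx0 : K x0 := nbhs_singleton ix0.
have Kiso : forall x y, K x -> dotv y y = dotv x x -> K y.
  by move=> x y Kx h; exact: key hc Kx h.
have K0 : K 0.
  have Kn : K (- x0).
    apply: (Kiso _ _ Kx0); rewrite -scaleN1r dotvZl dotvZr; ring.
  have := cvK x0 (- x0) (1 / 2) _ _ Kx0 Kn.
  have -> : (1 / 2 : R) *: x0 + (1 - 1 / 2) *: - x0 = 0.
    by rewrite scalerN (_ : 1 - 1 / 2 = 1 / 2 :> R) ?subrr //; field.
  by apply; lra.
have Kdown : forall x y, K x -> dotv y y <= dotv x x -> K y.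
  move=> x y Kx hle.
  have [hx0|hxn] := eqVneq (dotv x x) 0.
    apply: (Kiso _ _ K0); have -> : dotv (0 : 'rV[R]_n) 0 = 0 by rewrite /dotv mul0mx mxE.
    by apply/eqP; rewrite eq_le dotv_ge0 andbT -hx0 hle.
  have hxp : 0 < dotv x x by rewrite lt_neqAle eq_sym hxn dotv_ge0.
  pose t := Num.sqrt (dotv y y / dotv x x).
  have hq : 0 <= dotv y y / dotv x x by rewrite divr_ge0 ?dotv_ge0 // ltW.
  have ht0 : 0 <= t := sqrtr_ge0 _.
  have ht1 : t <= 1.
    rewrite /t -sqrtr1 ler_wsqrtr //.
    by rewrite ler_pdivrMr // mul1r.
  have := cvK x 0 t ht0 ht1 Kx K0; rewrite scaler0 addr0 => Kt.
  apply: (Kiso _ _ Kt); rewrite dotvZl dotvZr mulrA -expr2 sqrtK //.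
  by field; rewrite gt_eqF.
have [xm Kxm hmax] := @compact_EVT_max _ R (fun x : 'rV[R]_n => dotv x x) K
  (ex_intro _ x0 Kx0) cK (continuous_subspaceT dotv_cont).
have Kxm' : K xm := set_mem Kxm.
exists (enorm xm); split.
  rewrite lt_neqAle sqrtr_ge0 andbT eq_sym; apply/negP => /eqP h0.
  have hz : forall x, K x -> dotv x x = 0.
    move=> x Kx; apply/eqP; rewrite eq_le dotv_ge0 andbT.
    have := hmax x (mem_set Kx); move: h0; rewrite /enorm => /eqP.
    by rewrite sqrtr_eq0 => h1 h2; apply: le_trans h2 h1.
  have x00 : x0 = 0 by apply: dotv_eq0; apply: hz.
  have : nbhs (0 *: e0) K by rewrite scale0r -x00.
  move=> /(@scalel_continuous R _ e0 0) [eps eps0 heps]; have ep : 0 < eps := eps0.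
  have : K ((eps / 2) *: e0).
    apply: heps; rewrite /ball_ /= sub0r normrN ger0_norm; last by lra.
    lra.
  move=> /hz; rewrite dotv_se0 => /eqP; rewrite sqrf_eq0 => /eqP; lra.
apply/seteqP; split => y.
  move=> Ky; rewrite /= /enorm; apply: ler_wsqrtr; exact: hmax (mem_set Ky).
rewrite /= /enorm ler_sqrt ?dotv_ge0 // => hy.
exact: Kdown Kxm' hy.
Qed.

End S.

Unset Implicit Arguments.

Theorem corollary4p2 (R : realType) (n i : nat) :
  (1 <= i)%N -> (i <= n - 2)%N ->
  exists H : 'I_(ceil_div n (n - i)) -> 'M[R]_n,
    [/\ (forall j, \rank (H j) = i),
        (* (i) *)
        ((\sum_j orthc (H j) == 1%:M)%MS /\
         ~ (exists S : {set 'I_(ceil_div n (n - i))},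
              [/\ exists a, a \in S, exists b, b \notin S &
                  forall a b, a \in S -> b \notin S ->
                    orth_sub (orthc (H a)) (orthc (H b))])),
        (* (ii) *)
        (forall E : set 'rV[R]_n,
           E `<=` @usphere R n -> E !=set0 -> closed E ->
           (forall j x y, E x -> @usphere R n y ->
              (y - x <= orthc (H j))%MS -> E y) ->
           E = @usphere R n),
        (* (iii) *)
        (forall F : set 'rV[R]_n, closed F ->
           (forall j Q x, rotation_fixing (H j) Q -> F x -> F (x *m Q)) ->
           union_of_origin_spheres F) &
        (* (iv) *)
        (forall K : set 'rV[R]_n, convex_body K ->
           (forall j, rot_symmetric (H j) K) ->
           exists r : R, 0 < r /\ K = [set x | enorm x <= r])].
Proof.
move=> hi1; case: n => [|p] hi2; first by exfalso; move: hi1 hi2; lia.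
exists (fun j => Hm R p i j); split.
- by move=> j; exact: (@rank_Hm R p i hi1 hi2).
- by split; [exact: (@part1a R p i hi1 hi2) | exact: (@part1b R p i hi1 hi2)].
- by move=> E hEs hne _ hmv; exact: (@part2 R p i hi1 hi2).
- by move=> F _ hF; exact: (@part3 R p i hi1 hi2).
- by move=> K hK hs; exact: (@part4 R p i hi1 hi2).
Qed.
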